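(* Let $(q_n)$ be the Fibonacci Quilt sequence. For each integer $m\ge0$ let $d_{\rm FQ}(m)$ be the number of FQ-legal decompositions of $m$ (with $d_{\rm FQ}(0)=1$, counting the empty decomposition), and let \[ d_{\rm FQ;ave}(n)=\frac{1}{q_{n+1}}\sum_{m=0}^{q_{n+1}-1}d_{\rm FQ}(m). \] Let $r_1\approx1.39704$ be the largest root of $r^7-r^6-r^2-1=0$, let $\lambda_1\approx1.32472$ be the real root of $x^3-x-1=0$, and set $\lambda=r_1/\lambda_1\approx1.05459$. Then there exist constants $C_2>C_1>0$ such that for all sufficiently large $n$, \[ C_1\lambda^n\le d_{\rm FQ;ave}(n)\le C_2\lambda^n. \]
   Context: Given an increasing sequence of positive integers $(q_i)_{i\ge1}$, an FQ-legal decomposition of an integer $m\ge0$ is an expression $m=q_{\ell_1}+q_{\ell_2}+\cdots+q_{\ell_t}$ ($t\ge0$, the empty sum representing $0$) with distinct indices $\ell_1>\ell_2>\cdots>\ell_t$ such that $|\ell_i-\ell_j|\notin\{1,3,4\}$ for all $i,j$, and $\{1,3\}\not\subset\{\ell_1,\dots,\ell_t\}$. The Fibonacci Quilt sequence is the increasing sequence of positive integers $(q_i)_{i\ge1}$ in which each $q_i$ is the smallest positive integer having no FQ-legal decomposition using only $q_1,\dots,q_{i-1}$. Its first terms are $1,2,3,4,5,7,9,12,16,21,28,37,49,\dots$. Two decompositions are distinct if their index sets differ. *)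

(* Defs.v *)
From mathcomp Require Import all_boot.
From Stdlib Require Import Reals.
Set Implicit Arguments. Unset Strict Implicit. Unset Printing Implicit Defensive.

Definition FQlegal (N : nat) (S : {set 'I_N}) : bool :=
  [forall i in S, 0 < (i : nat)] &&
  [forall i in S, forall j in S,
      ((i : nat) < j) ==> ((j - i)%N \notin [:: 1; 3; 4])] &&
  ~~ ([exists i in S, (i : nat) == 1] && [exists j in S, (j : nat) == 3]).

Definition sumq (q : nat -> nat) (N : nat) (S : {set 'I_N}) : nat :=
  \sum_(i in S) q (i : nat).

Definition has_FQdec_below (q : nat -> nat) (i m : nat) : Prop :=
  exists S : {set 'I_i}, FQlegal S /\ sumq q S = m.

(* q (indexed from 1; q 0 is irrelevant) is the Fibonacci Quilt sequence:
   an increasing sequence of positive integers in which each q_i is the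
   smallest positive integer with no FQ-legal decomposition using only
   q_1, ..., q_{i-1}. *)
Definition IsFQ (q : nat -> nat) : Prop :=
  forall i, 0 < i ->
    [/\ 0 < q i, q i < q i.+1,
        ~ has_FQdec_below q i (q i)
      & forall m, 0 < m -> m < q i -> has_FQdec_below q i m].

(* Since q is increasing and positive, q_i >= i, so every index occurring
   in a decomposition of m is <= m; hence index sets in 'I_(m+1) are all
   of them.  d_FQ(0) = 1 (the empty set). *)
Definition dFQ (q : nat -> nat) (m : nat) : nat :=
  #|[set S : {set 'I_m.+1} | FQlegal S && (sumq q S == m)]|.

Definition dFQave (q : nat -> nat) (n : nat) : R :=
  (INR (\sum_(m < q n.+1) dFQ q m) / INR (q n.+1))%R.

(* Main.v *)
Require Import Defs.
From Stdlib Require Import Reals Lra Lia Psatz Arith.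

Section RealPart.
Local Open Scope R_scope.

Lemma Rpow_ge1_ r k : 1 <= r -> 1 <= r ^ k.
Proof. intros h; induction k; simpl; nra. Qed.

Lemma growth7 (u : nat -> R) (r B : R) : 1 < r -> r^7 = r^6 + r^2 + 1 ->
  (forall k, (k < 7)%nat -> 1 <= u k <= B) ->
  (forall k, u (k+7)%nat = u (k+6)%nat + u (k+2)%nat + u k) ->
  forall k, r^k <= r^6 * u k /\ u k <= B * r^k.
Proof.
intros hr h7 hb hrec k.
induction k as [k IH] using (well_founded_induction lt_wf).
destruct (Nat.lt_ge_cases k 7) as [hk|hk].
- destruct (hb k hk) as [a b].
  assert (e1 : r^k <= r^6) by (apply Rle_pow; [lra|lia]).
  assert (e2 : 1 <= r^k) by (apply Rpow_ge1_; lra).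
  assert (e3 : 1 <= r^6) by (apply Rpow_ge1_; lra).
  split; nra.
- replace k with ((k-7)+7)%nat by lia.
  set (j := (k-7)%nat).
  assert (ej : r^(j+7) = r^(j+6) + r^(j+2) + r^j).
  { rewrite !pow_add, h7; ring. }
  destruct (IH (j+6)%nat ltac:(unfold j; lia)) as [a1 b1].
  destruct (IH (j+2)%nat ltac:(unfold j; lia)) as [a2 b2].
  destruct (IH j ltac:(unfold j; lia)) as [a3 b3].
  rewrite hrec, ej. split; lra.
Qed.

Lemma growth3 (u : nat -> R) (r B : R) : 1 < r -> r^3 = r + 1 ->
  (forall k, (k < 3)%nat -> 1 <= u k <= B) ->
  (forall k, u (k+3)%nat = u (k+1)%nat + u k) ->
  forall k, r^k <= r^2 * u k /\ u k <= B * r^k.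
Proof.
intros hr h3 hb hrec k.
induction k as [k IH] using (well_founded_induction lt_wf).
destruct (Nat.lt_ge_cases k 3) as [hk|hk].
- destruct (hb k hk) as [a b].
  assert (e1 : r^k <= r^2) by (apply Rle_pow; [lra|lia]).
  assert (e2 : 1 <= r^k) by (apply Rpow_ge1_; lra).
  assert (e3 : 1 <= r^2) by (apply Rpow_ge1_; lra).
  split; nra.
- replace k with ((k-3)+3)%nat by lia.
  set (j := (k-3)%nat).
  assert (ej : r^(j+3) = r^(j+1) + r^j).
  { rewrite !pow_add, h3; ring. }
  destruct (IH (j+1)%nat ltac:(unfold j; lia)) as [a1 b1].
  destruct (IH j ltac:(unfold j; lia)) as [a3 b3].
  rewrite hrec, ej. split; lra.
Qed.

Lemma r1_gt1 r : r ^ 7 - r ^ 6 - r ^ 2 - 1 = 0 -> 1 < r.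
Proof.
intros h. destruct (Rle_or_lt r 1) as [hr|hr]; [exfalso|lra].
assert (h6 : 0 <= r^6) by (replace (r^6) with ((r^3)^2) by ring; apply pow2_ge_0).
assert (h2 : 0 <= r^2) by apply pow2_ge_0.
assert (e : r^7 - r^6 = r^6 * (r - 1)) by ring.
assert (0 <= r^6 * (1 - r)) by (apply Rmult_le_pos; lra).
lra.
Qed.

Lemma lam_gt1 l : l ^ 3 - l - 1 = 0 -> 1 < l.
Proof.
intros h. destruct (Rle_or_lt l 1) as [hr|hr]; [exfalso|lra].
replace (l^3) with (l*l*l) in h by ring.
destruct (Rle_or_lt 0 l) as [h0|h0].
- assert (l*l <= 1) by nra. nra.
- destruct (Rle_or_lt (l*l) 1) as [h1|h1]; nra.
Qed.

Lemma le_div (a b c : R) : 0 < c -> a * c <= b -> a <= b / c.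
Proof.
intros hc h. unfold Rdiv. apply Rmult_le_reg_r with c; auto.
rewrite Rmult_assoc, Rinv_l, Rmult_1_r; lra.
Qed.

Lemma div_le (a b c : R) : 0 < c -> b <= a * c -> b / c <= a.
Proof.
intros hc h. unfold Rdiv. apply Rmult_le_reg_r with c; auto.
rewrite Rmult_assoc, Rinv_l, Rmult_1_r; lra.
Qed.

Lemma final_bound (r l B : R) (a T Qv : nat -> R) : 1 < r -> 1 < l ->
  (forall n, (3 <= n)%nat -> T (n-2)%nat <= a n <= T n) ->
  (forall k, r^k <= r^6 * T k /\ T k <= B * r^k) ->
  (forall k, l^k <= l^2 * Qv k /\ Qv k <= 4 * l^k) ->
  exists C1 C2, 0 < C1 /\ C1 < C2 /\
    forall n, (3 <= n)%nat -> C1 * (r/l)^n <= a n / Qv (n-1)%nat <= C2 * (r/l)^n.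
Proof.
intros hr hl ha hT hQ.
assert (hr8 : 0 < r^8) by (apply pow_lt; lra).
assert (hr6 : 0 < r^6) by (apply pow_lt; lra).
assert (hl3 : 0 < l^3) by (apply pow_lt; lra).
assert (hB : 0 < B).
{ destruct (hT 0%nat) as [h1 h2]. simpl in *. nra. }
exists (l / (4 * r^8)), (B * l^3 + l / (4 * r^8)).
assert (hC1 : 0 < l / (4 * r^8)) by (apply Rdiv_lt_0_compat; lra).
split; [exact hC1|]. split; [nra|].
intros n hn.
destruct (ha n hn) as [a1 a2].
set (m := (n-2)%nat).
assert (en : n = (m+2)%nat) by (unfold m; lia).
assert (en1 : (n-1)%nat = (m+1)%nat) by (unfold m; lia).
fold m in a1. rewrite en1. rewrite en in a1, a2 |- *.
set (X := r^m). set (Y := l^m).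
assert (hX : 0 < X) by (apply pow_lt; lra).
assert (hY : 0 < Y) by (apply pow_lt; lra).
destruct (hT m) as [t1 _]. destruct (hT (m+2)%nat) as [_ t2].
destruct (hQ (m+1)%nat) as [q1 q2].
rewrite pow_add in t2, q1, q2. fold X in t1, t2. fold Y in q1, q2.
assert (ep : (r/l)^(m+2) = X * r^2 / (Y * l^2)).
{ unfold Rdiv. rewrite Rpow_mult_distr, pow_inv, !pow_add. fold X Y. field. split; lra. }
rewrite ep.
assert (hQv : 0 < Qv (m+1)%nat) by nra.
simpl pow in q1, q2, t2.
split.
- apply le_div; [exact hQv|].
  apply Rle_trans with (l / (4 * r ^ 8) * (X * r ^ 2 / (Y * l ^ 2)) * (4 * (Y * (l * 1)))).
  + apply Rmult_le_compat_l; [|lra].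
    apply Rmult_le_pos; [lra|]. apply Rlt_le, Rdiv_lt_0_compat; nra.
  + replace (l / (4 * r ^ 8) * (X * r ^ 2 / (Y * l ^ 2)) * (4 * (Y * (l * 1)))) with (X / r^6)
      by (field; repeat split; try lra; nra).
    apply div_le; [exact hr6|]. nra.
- apply div_le; [exact hQv|].
  assert (e2 : (B * l ^ 3 + l / (4 * r ^ 8)) * (X * r ^ 2 / (Y * l ^ 2)) * Qv (m + 1)%nat
     = B * l * X * r^2 / Y * Qv (m+1)%nat + l / (4 * r ^ 8) * (X * r ^ 2 / (Y * l ^ 2)) * Qv (m + 1)%nat)
     by (field; split; lra).
  rewrite e2.
  assert (0 <= l / (4 * r ^ 8) * (X * r ^ 2 / (Y * l ^ 2)) * Qv (m + 1)%nat).
  { apply Rmult_le_pos; [|lra]. apply Rmult_le_pos; [lra|]. apply Rlt_le, Rdiv_lt_0_compat; nra. }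
  assert (B * (X * (r * (r * 1))) <= B * l * X * r ^ 2 / Y * Qv (m + 1)%nat).
  { replace (B * l * X * r ^ 2 / Y * Qv (m + 1)%nat) with (B * X * r^2 * (l * Qv (m+1)%nat / Y))
      by (field; lra).
    replace (B * (X * (r * (r * 1)))) with (B * X * r^2 * 1) by ring.
    apply Rmult_le_compat_l. { apply Rmult_le_pos; [nra|]. nra. }
    apply le_div; [exact hY|]. nra. }
  lra.
Qed.

End RealPart.

From mathcomp Require Import all_boot zify.
From Stdlib Require Import Reals.
Set Implicit Arguments. Unset Strict Implicit. Unset Printing Implicit Defensive.

Fixpoint Q (n : nat) : nat :=
  match n with
  | 0 => 0 | 1 => 1 | 2 => 2 | 3 => 3 | 4 => 4
  | S (S ((S ((S (S k)) as p)) as m)) => Q m + Q p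
  end.

Lemma QS n : Q n.+4.+1 = Q n.+3 + Q n.+2. Proof. by []. Qed.

Lemma Qinc n : 0 < n -> Q n < Q n.+1.
Proof.
elim/ltn_ind: n => n IH Hn.
case: n IH Hn => [|[|[|[|[|n]]]]] IH Hn //.
have e1 := QS n. have e2 := QS n.+1.
have h1 := IH n.+3 ltac:(lia) ltac:(lia).
have h2 := IH n.+2 ltac:(lia) ltac:(lia).
lia.
Qed.

Lemma Qmono m n : 0 < m -> m <= n -> Q m <= Q n.
Proof.
move=> Hm; elim: n => [|n IH]; first by lia.
rewrite leq_eqVlt; case/orP=> [/eqP->//|H].
have := IH H; have := Qinc (n:=n); lia.
Qed.

Lemma Qge n : n <= Q n.
Proof.
elim: n => [//|n IH]; case: n IH => [//|n] IH.
have := Qinc (n:=n.+1); lia.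
Qed.

Lemma Qrec5 n : Q n.+4.+3 = Q n.+4.+2 + Q n.+2.
Proof. have := QS n.+2; have := QS n.+1; have := QS n; lia. Qed.

Definition inS N (S : {set 'I_N}) (n : nat) : bool := [exists x in S, (x : nat) == n].
Definition compat (t y : nat) : bool :=
  [&& y.+1 != t, t.+1 != y, y+3 != t, t+3 != y, y+4 != t, t+4 != y,
      ~~ ((t == 3) && (y == 1)) & ~~ ((t == 1) && (y == 3))].
Definition legalN (s : pred nat) : Prop :=
  (forall i, s i -> 0 < i) /\ (forall i j, s i -> s j -> compat i j).

Lemma inSP N (S : {set 'I_N}) n : reflect (exists2 x, x \in S & (x : nat) = n) (inS S n).
Proof.
apply: (iffP existsP) => [[x /andP[xS /eqP<-]]|[x xS <-]]; first by exists x.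
by exists x; rewrite xS eqxx.
Qed.

Lemma inS_val N (S : {set 'I_N}) (x : 'I_N) : inS S (x : nat) = (x \in S).
Proof.
apply/inSP/idP => [[y yS /val_inj e]|xS]; [by rewrite -e | by exists x].
Qed.

Lemma legalP N (S : {set 'I_N}) : FQlegal S <-> legalN (inS S).
Proof.
rewrite /FQlegal; split.
- case/andP=> [/andP[/forallP H1 /forallP H2] H3]; split.
  + by move=> i /inSP[x xS <-]; have := H1 x; rewrite xS.
  + move=> i j /inSP[x xS ex] /inSP[y yS ey]; subst i j.
    have Hxy := H2 x; rewrite xS /= in Hxy; move/forallP: Hxy => Hxy.
    have Hyx := H2 y; rewrite yS /= in Hyx; move/forallP: Hyx => Hyx.
    have := Hxy y; have := Hyx x; rewrite xS yS /= !inE.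
    have nex : ~~ ((x == 3 :> nat) && (y == 1 :> nat)).
      apply/negP=> /andP[/eqP e1 /eqP e2]; move: H3; rewrite negb_and; case/orP=> /negP; apply.
      by apply/existsP; exists y; rewrite yS e2.
      by apply/existsP; exists x; rewrite xS e1.
    have ney : ~~ ((x == 1 :> nat) && (y == 3 :> nat)).
      apply/negP=> /andP[/eqP e1 /eqP e2]; move: H3; rewrite negb_and; case/orP=> /negP; apply.
      by apply/existsP; exists x; rewrite xS e1.
      by apply/existsP; exists y; rewrite yS e2.
    move: nex ney; rewrite /compat.
    case: (ltngtP x y) => hxy; rewrite ?implyTb ?implyFb => nex ney.
    * move=> _ h; move: h nex ney; lia.
    * move=> h _; move: h nex ney; lia.
    * move=> _ _; move: nex ney; lia.
- case=> H1 H2; apply/andP; split; first (apply/andP; split).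
  + apply/forallP => x; apply/implyP => xS; apply: H1; by rewrite inS_val.
  + apply/forallP => x; apply/implyP => xS; apply/forallP => y; apply/implyP => yS.
    apply/implyP => lxy; have := H2 _ _ (introT (inSP _ _ ) (ex_intro2 _ _ x xS erefl)) (introT (inSP _ _) (ex_intro2 _ _ y yS erefl)).
    rewrite /compat !inE; lia.
  + apply/negP => /andP[/existsP[x /andP[xS /eqP e1]] /existsP[y /andP[yS /eqP e2]]].
    have := H2 _ _ (introT (inSP _ _ ) (ex_intro2 _ _ x xS erefl)) (introT (inSP _ _) (ex_intro2 _ _ y yS erefl)).
    by rewrite /compat e1 e2.
Qed.

Lemma compatC t y : compat t y = compat y t.
Proof. rewrite /compat; lia. Qed.

Lemma inS_setU1 N (S : {set 'I_N}) (x : 'I_N) n :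
  inS (x |: S) n = ((x : nat) == n) || inS S n.
Proof.
apply/inSP/orP => [[y]|[/eqP e|/inSP[y yS e]]].
- rewrite !inE => /orP[/eqP->->|yS e]; [by left | by right; apply/inSP; exists y].
- by exists x; rewrite // !inE eqxx.
- by exists y; rewrite // !inE yS orbT.
Qed.

Lemma inS_setD1 N (S : {set 'I_N}) (x : 'I_N) n :
  inS (S :\ x) n = ((x : nat) != n) && inS S n.
Proof.
apply/inSP/andP => [[y]|[ne /inSP[y yS e]]].
- rewrite !inE => /andP[yx yS] e; split; last by apply/inSP; exists y.
  by rewrite -e; apply: contra yx => /eqP/val_inj->.
- exists y => //; rewrite !inE yS andbT; apply: contra ne => /eqP<-; by rewrite e.
Qed.

Lemma inS_widen N M (h : N <= M) (S : {set 'I_N}) n :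
  inS (widen_ord h @: S) n = inS S n.
Proof.
apply/inSP/inSP => [[y /imsetP[z zS ->] e]|[y yS e]].
- by exists z.
- by exists (widen_ord h y); [apply: imset_f | ].
Qed.

Lemma legalN_sub (s s' : pred nat) : (forall n, s' n -> s n) -> legalN s -> legalN s'.
Proof. move=> H [H1 H2]; split=> [i /H/H1 //|i j /H a /H b]; exact: H2. Qed.

Lemma legalN_add t (s : pred nat) :
  legalN (fun n => (t == n) || s n) <-> [/\ 0 < t, legalN s & forall y, s y -> compat t y].
Proof.
split.
- case=> H1 H2; split.
  + by apply: H1; rewrite eqxx.
  + split=> [i si|i j si sj]; [apply: H1 | apply: H2]; by rewrite ?si ?sj orbT.
  + move=> y sy; apply: H2; by rewrite ?sy ?eqxx ?orbT.
- case=> ht [H1 H2] H3; split.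
  + by move=> i /orP[/eqP<-//|/H1].
  + move=> i j /orP[/eqP<-|si] /orP[/eqP<-|sj].
    * rewrite /compat; lia.
    * exact: H3.
    * rewrite compatC; exact: H3.
    * exact: H2.
Qed.

Lemma legal_empty N : FQlegal (set0 : {set 'I_N}).
Proof.
apply/legalP; split=> [i|i j] /inSP[x]; by rewrite inE.
Qed.

Section Sums.
Variable g : nat -> nat.

Lemma sumq_setU1 N (S : {set 'I_N}) x : x \notin S -> sumq g (x |: S) = g x + sumq g S.
Proof. move=> xS; by rewrite /sumq big_setU1. Qed.

Lemma sumq_setD1 N (S : {set 'I_N}) x : x \in S -> sumq g S = g x + sumq g (S :\ x).
Proof. move=> xS; by rewrite /sumq (big_setD1 x). Qed.

Lemma sumq_ge N (S : {set 'I_N}) x : x \in S -> g x <= sumq g S.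
Proof. move=> xS; rewrite (sumq_setD1 xS); lia. Qed.

Lemma sumq_empty N (S : {set 'I_N}) : (forall n, inS S n -> False) -> sumq g S = 0.
Proof.
move=> H; rewrite /sumq big1 // => i iS; exfalso; apply: (H i); by rewrite inS_val.
Qed.

Lemma sumq_widen N M (h : N <= M) (S : {set 'I_N}) : sumq g (widen_ord h @: S) = sumq g S.
Proof.
rewrite /sumq big_imset //= => x y _ _ /(congr1 val) /= e; exact: val_inj.
Qed.

Lemma sumq_ext (g' : nat -> nat) N (S : {set 'I_N}) :
  (forall n, inS S n -> g n = g' n) -> sumq g S = sumq g' S.
Proof. move=> H; apply: eq_bigr => i iS; apply: H; by rewrite inS_val. Qed.
End Sums.

Lemma legal_widen N M (h : N <= M) (S : {set 'I_N}) : FQlegal (widen_ord h @: S) = FQlegal S.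
Proof.
apply/idP/idP => /legalP H; apply/legalP; apply: legalN_sub H => n; by rewrite inS_widen.
Qed.

Lemma legal_facts N (S : {set 'I_N}) : FQlegal S ->
  forall n m, inS S n -> inS S m -> compat n m && (0 < n).
Proof. move/legalP=> [H1 H2] n m a b; by rewrite H2 // H1. Qed.

Lemma removeP g N (S : {set 'I_N}) t : FQlegal S -> inS S t ->
  exists S' : {set 'I_N}, [/\ FQlegal S', sumq g S = g t + sumq g S'
                            & forall n, inS S' n = (t != n) && inS S n].
Proof.
move=> HS /inSP[x xS <-]; exists (S :\ x); split.
- move/legalP: HS => HS; apply/legalP; apply: legalN_sub HS => n.
  by rewrite inS_setD1 => /andP[].
- exact: sumq_setD1.
- by move=> n; rewrite inS_setD1.
Qed.

Lemma addP g N (S : {set 'I_N}) t : t < N -> FQlegal S -> 0 < t -> ~~ inS S t ->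
  (forall n, inS S n -> compat t n) ->
  exists S' : {set 'I_N}, [/\ FQlegal S', sumq g S' = g t + sumq g S
                            & forall n, inS S' n = (t == n) || inS S n].
Proof.
move=> ht HS t0 tS Hc; pose x := Ordinal ht.
have xS : x \notin S by rewrite -inS_val.
exists (x |: S); split.
- apply/legalP; apply: (@legalN_sub (fun n => (t == n) || inS S n)) => [n|].
    by rewrite inS_setU1.
  by apply/legalN_add; split => //; apply/legalP.
- exact: sumq_setU1.
- by move=> n; rewrite inS_setU1.
Qed.

Lemma empty_sum g N (S : {set 'I_N}) K : FQlegal S -> K <= 1 ->
  (forall n, inS S n -> n < K) -> sumq g S = 0.
Proof.
move=> HS HK H; apply: sumq_empty => n nS.
have := H n nS; have := legal_facts HS nS nS; lia.
Qed.

Lemma Qval : Q 0 = 0 /\ Q 1 = 1 /\ Q 2 = 2 /\ Q 3 = 3 /\ Q 4 = 4 /\ Q 5 = 5 /\ Q 6 = 7 /\ Q 7 = 9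
              /\ Q 8 = 12 /\ Q 9 = 16 /\ Q 10 = 21 /\ Q 11 = 28.
Proof. by []. Qed.

Lemma ineqA t : 4 <= t -> Q t + Q (t-2) + Q (t-6).+2 <= Q t.+3.
Proof.
case: t => [|[|[|[|[|[|u]]]]]] // _.
have e1 := QS u.+4. have e2 := QS u.+2.
have m1 := Qmono (m := u.+2) (n:=u.+4.+1) erefl ltac:(lia).
rewrite !subSS !subn0; lia.
Qed.

Lemma ineqB t : 1 <= t -> Q t + Q (t-4).+2 <= Q t.+3.
Proof.
case: t => [|[|[|[|u]]]] // _.
have e1 := QS u.+2.
have m1 := Qmono (m := u.+2) (n:=u.+4.+1) erefl ltac:(lia).
rewrite !subSS !subn0; lia.
Qed.

Lemma notin_ne N (S : {set 'I_N}) a : ~~ inS S a -> forall n, inS S n -> n != a.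
Proof. move=> h n hn; apply/eqP => e; by rewrite -e hn in h. Qed.

Lemma cc t n : compat t n -> [|| t + 5 <= n, n + 5 <= t, n == t, n + 2 == t | t + 2 == n].
Proof. rewrite /compat; lia. Qed.

Lemma ub1 t n : t - 2 != n -> t != n -> n < t.+1 -> compat t n -> compat (t-2) n -> 0 < n -> n < t - 6.
Proof. move=> h1 h2 h3 h4 h5 h6; move: h4 h5 => /cc h4 /cc h5; lia. Qed.
Lemma ub2 t : compat t (t-2) -> 0 < t-2 -> 4 <= t.
Proof. rewrite /compat; lia. Qed.
Lemma ub3 t n : n != t-2 -> t != n -> n < t.+1 -> compat t n -> 0 < n -> n < t - 4.
Proof. move=> h1 h2 h3 /cc h4 h5; lia. Qed.

Lemma UB K : forall N (S : {set 'I_N}), FQlegal S -> (forall n, inS S n -> n < K) ->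
  sumq Q S < Q K.+2.
Proof.
elim/ltn_ind: K => K IH N S HS HK.
case: K IH HK => [|t] IH HK.
  by rewrite (empty_sum Q HS _ HK).
have F := legal_facts HS.
have Fc : forall n m, inS S n -> inS S m -> compat n m by move=> n m a b; case/andP: (F n m a b).
have Fp : forall n, inS S n -> 0 < n by move=> n a; case/andP: (F n n a a).
clear F.
case tS: (inS S t); last first.
  have H : forall n, inS S n -> n < t.
    move=> n nS; have := HK n nS; have := notin_ne (negbT tS) nS; lia.
  have := IH t (ltnSn t) N S HS H; have := Qmono (m := t.+2) (n := t.+3) erefl (leqnSn _); lia.
have [S1 [HS1 e1 i1]] := removeP Q HS tS.
case uS: (inS S1 (t-2)).
  have [S2 [HS2 e2 i2]] := removeP Q HS1 uS.
  move: (uS); rewrite i1 => /andP[tu uS'].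
  have h4 := ub2 (Fc _ _ tS uS') (Fp _ uS').
  have H : forall n, inS S2 n -> n < t - 6.
    move=> n; rewrite i2 i1 => /andP[a /andP[b c]].
    exact: ub1 a b (HK n c) (Fc _ _ tS c) (Fc _ _ uS' c) (Fp _ c).
  have := IH (t-6) ltac:(lia) N S2 HS2 H.
  have := ineqA h4; lia.
have H : forall n, inS S1 n -> n < t - 4.
  move=> n hn; have := notin_ne (negbT uS) hn; move: hn; rewrite i1 => /andP[b c] a.
  exact: ub3 a b (HK n c) (Fc _ _ tS c) (Fp _ c).
have := IH (t-4) ltac:(lia) N S1 HS1 H.
have h1 : 1 <= t by exact: Fp.
have := ineqB h1; lia.
Qed.

Lemma inS_set0 N n : inS (set0 : {set 'I_N}) n = false.
Proof. by apply/inSP => -[x]; rewrite inE. Qed.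

Lemma sumq0 g N : sumq g (set0 : {set 'I_N}) = 0.
Proof. by rewrite /sumq big_set0. Qed.

Lemma single N t : 0 < t -> t < N ->
  exists S : {set 'I_N}, [/\ FQlegal S, (forall n, inS S n -> n = t) & sumq Q S = Q t].
Proof.
move=> t0 tN.
have h1 : ~~ inS (set0 : {set 'I_N}) t by rewrite inS_set0.
have h2 : forall n, inS (set0 : {set 'I_N}) n -> compat t n by move=> n; rewrite inS_set0.
have [S [HS e i]] := addP Q tN (legal_empty N) t0 h1 h2.
exists S; split => //; last by rewrite e sumq0 addn0.
by move=> n; rewrite i inS_set0 orbF => /eqP.
Qed.

Lemma Rep i : 0 < i -> forall N, i <= N -> forall m, m < Q i ->
  exists S : {set 'I_N}, [/\ FQlegal S, (forall n, inS S n -> n < i) & sumq Q S = m].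
Proof.
elim/ltn_ind: i => i IH hi N hN m hm.
have [V0 [V1 [V2 [V3 [V4 [V5 [V6 _]]]]]]] := Qval.
case: (leqP i 6) => hi6.
  case: (posnP m) => [->|m0].
    exists set0; split; [exact: legal_empty | by move=> n; rewrite inS_set0 | exact: sumq0].
  case: (ltnP m i) => hmi.
    have [S [HS H e]] := single m0 (leq_trans hmi hN).
    exists S; split => //; first by move=> n /H ->.
    rewrite e; case: m {m0 hm e H} hmi => [|[|[|[|[|[|m]]]]]] // hmi; lia.
  have e6 : i = 6 /\ m = 6.
    case: i {IH hi hN} hi6 hm hmi => [|[|[|[|[|[|[|i]]]]]]] //= _; lia.
  case: e6 => ei em; subst i m.
  have [S [HS H e]] := single (N:=N) (t:=4) erefl ltac:(lia).
  have [S' [HS' e' i']] := addP Q (t:=2) (S:=S) ltac:(lia) HS erefl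
      ltac:(by apply/negP => /H) (fun n hn => ltac:(by rewrite (H n hn))).
  exists S'; split => //.
    by move=> n; rewrite i' => /orP[/eqP<-//|/H->].
  by rewrite e' e.
have hrec : Q i = Q i.-1 + Q (i - 5).
  case: i {IH hi hN hm} hi6 => [|[|[|[|[|[|[|i]]]]]]] //= _.
  have := Qrec5 i; lia.
case: (ltnP m (Q i.-1)) => hm1.
  have [S [HS H e]] := IH i.-1 ltac:(lia) ltac:(lia) N ltac:(lia) m hm1.
  exists S; split => //; move=> n /H; lia.
have [S [HS H e]] := IH (i - 5) ltac:(lia) ltac:(lia) N ltac:(lia) (m - Q i.-1) ltac:(lia).
have F := legal_facts HS.
have [S' [HS' e' i']] := addP Q (t:=i.-1) (S:=S) ltac:(lia) HS ltac:(lia)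
      ltac:(by apply/negP => /H; lia) (fun n hn => ltac:(have := H n hn; have := F n n hn hn; rewrite /compat; lia)).
exists S'; split => //.
  by move=> n; rewrite i' => /orP[/eqP<-|/H]; lia.
rewrite e' e; lia.
Qed.

Lemma L1 i : 5 <= i -> Q i < Q i.-1 + Q (i-3).
Proof.
case: i => [|[|[|[|[|u]]]]] // _; rewrite !subSS ?subn0 succnK.
have := QS u; have := Qinc (n := u.+3) erefl; lia.
Qed.

Lemma L2 i : 7 <= i -> Q i = Q i.-1 + Q (i-5).
Proof.
case: i => [|[|[|[|[|[|[|u]]]]]]] // _; rewrite !subSS ?subn0 succnK.
have := Qrec5 u; lia.
Qed.

Lemma L3 i : 10 <= i -> Q i = Q (i-2) + Q (i-4) + Q (i-8).
Proof.
case: i => [|[|[|[|[|[|[|[|[|[|u]]]]]]]]]] // _; rewrite !subSS ?subn0.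
have := QS u.+4.+1; have := Qrec5 u; lia.
Qed.

Lemma L4 i : 6 <= i -> i <= 9 -> Q (i-2) + Q (i-4) != Q i.
Proof. by case: i => [|[|[|[|[|[|[|[|[|[|u]]]]]]]]]]. Qed.

Lemma L5 i : 3 <= i -> Q (i-2) + Q (i-6).+2 <= Q i.
Proof.
case: i => [|[|[|[|[|[|u]]]]]] // _; rewrite !subSS ?subn0.
have := QS u.+1; have := Qmono (m := u.+2) (n := u.+3) erefl (leqnSn _); lia.
Qed.

Lemma nr1 i : compat i.-1 (i-3) -> 0 < i-3 -> 5 <= i.
Proof. rewrite /compat; lia. Qed.
Lemma nr2 i n : i.-1 != n -> n != i-3 -> n < i -> compat i.-1 n -> 0 < n -> n < i - 5.
Proof. move=> h1 h2 h3 /cc h4 h5; lia. Qed.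
Lemma nr3 i : compat (i-2) (i-4) -> 0 < i-4 -> 6 <= i.
Proof. rewrite /compat; lia. Qed.
Lemma nr4 i n : i-4 != n -> i-2 != n -> n != i.-1 -> n < i -> compat (i-2) n ->
  compat (i-4) n -> 0 < n -> n < i - 8.
Proof. move=> h1 h2 h3 h4 /cc h5 /cc h6 h7; lia. Qed.
Lemma nr5 i n : i-2 != n -> n != i-4 -> n != i.-1 -> n < i -> compat (i-2) n -> 0 < n -> n < i - 6.
Proof. move=> h1 h2 h3 h4 /cc h5 h7; lia. Qed.

Lemma NR i : 0 < i -> forall N (S : {set 'I_N}), FQlegal S ->
  (forall n, inS S n -> n < i) -> sumq Q S != Q i.
Proof.
elim/ltn_ind: i => i IH hi N S HS HK.
have F := legal_facts HS.
have Fc : forall n m, inS S n -> inS S m -> compat n m by move=> n m a b; case/andP: (F n m a b).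
have Fp : forall n, inS S n -> 0 < n by move=> n a; case/andP: (F n n a a).
clear F.
apply/eqP => E.
case a: (inS S i.-1).
  have [S1 [HS1 e1 i1]] := removeP Q HS a.
  have h0 : 0 < i.-1 by exact: Fp.
  case b: (inS S1 (i-3)).
    have [S2 [HS2 e2 i2]] := removeP Q HS1 b.
    move: (b); rewrite i1 => /andP[_ b'].
    have h5 := nr1 (Fc _ _ a b') (Fp _ b').
    have := L1 h5; lia.
  have H : forall n, inS S1 n -> n < i - 5.
    move=> n hn; have := notin_ne (negbT b) hn; move: hn; rewrite i1 => /andP[x c].
    move=> y; exact: nr2 x y (HK n c) (Fc _ _ a c) (Fp _ c).
  case: (leqP 7 i) => h7.
    have := IH (i-5) ltac:(lia) ltac:(lia) N S1 HS1 H.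
    have := L2 h7; move/eqP; lia.
  have := @empty_sum Q N S1 (i-5) HS1 ltac:(lia) H.
  have := Qinc h0; rewrite prednK //; lia.
case b: (inS S (i-2)).
  have [S1 [HS1 e1 i1]] := removeP Q HS b.
  have hb0 : 0 < i - 2 by exact: Fp.
  case c: (inS S1 (i-4)).
    have [S2 [HS2 e2 i2]] := removeP Q HS1 c.
    move: (c); rewrite i1 => /andP[_ c'].
    have h6 := nr3 (Fc _ _ b c') (Fp _ c').
    have H : forall n, inS S2 n -> n < i - 8.
      move=> n; rewrite i2 i1 => /andP[x /andP[y d]].
      exact: nr4 x y (notin_ne (negbT a) d) (HK n d) (Fc _ _ b d) (Fc _ _ c' d) (Fp _ d).
    case: (leqP 10 i) => h10.
      have := IH (i-8) ltac:(lia) ltac:(lia) N S2 HS2 H.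
      have := L3 h10; move/eqP; lia.
    have := @empty_sum Q N S2 (i-8) HS2 ltac:(lia) H.
    have := L4 h6 ltac:(lia); move/eqP; lia.
  have H : forall n, inS S1 n -> n < i - 6.
    move=> n hn; have := notin_ne (negbT c) hn; move: hn; rewrite i1 => /andP[x d].
    move=> y; exact: nr5 x y (notin_ne (negbT a) d) (HK n d) (Fc _ _ b d) (Fp _ d).
  have := UB HS1 H.
  have := L5 (i := i) ltac:(lia); lia.
have H : forall n, inS S n -> n < i - 2.
  move=> n d; have := notin_ne (negbT a) d; have := notin_ne (negbT b) d.
  have := HK n d; lia.
case: (leqP 2 i) => h2.
  have e : (i-2).+2 = i by lia.
  have := UB HS H; rewrite e; lia.
have ei : i = 1 by lia.
subst i; have := @empty_sum Q N S 1 HS erefl HK; rewrite E; done.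
Qed.

Lemma inS_lt N (S : {set 'I_N}) n : inS S n -> n < N.
Proof. by case/inSP => x _ <-. Qed.

Lemma q_eq q : IsFQ q -> forall i, 0 < i -> q i = Q i.
Proof.
move=> hq; elim/ltn_ind => i IH hi.
have Hs : forall (S : {set 'I_i}), FQlegal S -> sumq q S = sumq Q S.
  move=> S HS; apply: sumq_ext => n hn; apply: IH; first exact: inS_lt hn.
  by have := legal_facts HS hn hn => /andP[].
have [q0 qlt nrep rep] := hq i hi.
case: (ltngtP (q i) (Q i)) => // h.
- have [S [HS _ e]] := Rep hi (leqnn i) h.
  by case: nrep; exists S; split => //; rewrite Hs.
- have Qi0 : 0 < Q i by have := Qge i; lia.
  have [S [HS e]] := rep (Q i) Qi0 h.
  have := NR hi HS (@inS_lt i S); by rewrite -Hs // e eqxx.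
Qed.

Lemma card_widen N M (h : N <= M) (P : {set 'I_M} -> bool) :
  (forall S, P S -> forall n, inS S n -> n < N) ->
  #|[set S | P S]| = #|[set S : {set 'I_N} | P (widen_ord h @: S)]|.
Proof.
move=> HP.
have inj : injective (fun S : {set 'I_N} => widen_ord h @: S).
  apply: imset_inj => x y /(congr1 val) /= e; exact: val_inj.
rewrite -(card_imset _ inj); apply: eq_card => S; rewrite inE.
apply/idP/imsetP => [PS|[S' ]]; last by rewrite inE => PS' ->.
have key : S = widen_ord h @: [set x : 'I_N | widen_ord h x \in S].
  apply/setP => y; apply/idP/imsetP => [yS|[z zS ->]]; last by rewrite inE in zS.
  have yN : y < N by apply: (HP S PS); rewrite inS_val.
  have e : y = widen_ord h (Ordinal yN) by apply: val_inj.
  by exists (Ordinal yN); rewrite // inE -e.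
by exists [set x : 'I_N | widen_ord h x \in S]; rewrite // inE -key.
Qed.

Lemma sum_fibers (T : finType) (P : pred T) (f : T -> nat) K :
  \sum_(m < K) #|[set S | P S && (f S == m)]| = #|[set S | P S && (f S < K)]|.
Proof.
elim: K => [|K IH].
  rewrite big_ord0; apply/esym/eqP; rewrite cards_eq0; apply/eqP/setP => S; by rewrite !inE ltn0 andbF.
rewrite big_ord_recr /= IH -(cardsID [set S | f S < K] [set S | P S && (f S < K.+1)]).
congr (_ + _); apply: eq_card => S; rewrite !inE; case: (P S) => /=; lia.
Qed.

Definition allin N (S : {set 'I_N}) (a : pred nat) := [forall x in S, a (x : nat)].

Lemma allinP N (S : {set 'I_N}) (a : pred nat) : reflect (forall n, inS S n -> a n) (allin S a).
Proof.
apply: (iffP forallP) => [H n /inSP[x xS <-]|H x].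
  by have := H x; rewrite xS.
by apply/implyP => xS; apply: H; rewrite inS_val.
Qed.

Definition Cnt M (a : pred nat) := #|[set S : {set 'I_M} | FQlegal S && allin S a]|.

Lemma Cnt_ext M (a b : pred nat) : (forall y, a y = b y) -> Cnt M a = Cnt M b.
Proof.
move=> H; apply: eq_card => S; rewrite !inE; congr (_ && _).
apply/allinP/allinP => H' n /H'; by rewrite H.
Qed.

Lemma Cnt_split M (a : pred nat) t (ht : t < M) :
  Cnt M a = Cnt M (fun y => a y && (y != t)) +
     (if a t && (0 < t) then Cnt M (fun y => [&& a y, y != t & compat t y]) else 0).
Proof.
set x := Ordinal ht.
have xt : (x : nat) = t by [].
rewrite /Cnt -(cardsID [set S : {set 'I_M} | x \in S]) addnC.
congr (_ + _).
  apply: eq_card => S; rewrite !inE.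
  case: (FQlegal S) => //=; rewrite ?andbF //.
  rewrite -inS_val xt.
  apply/idP/allinP => [/andP[nt /allinP H] n hn|H].
    by rewrite H //=; apply: (notin_ne nt hn).
  apply/andP; split.
    by apply/negP => /H /andP[_]; rewrite eqxx.
  by apply/allinP => n /H /andP[].
set b := (fun y => [&& a y, y != t & compat t y]).
set D := [set S : {set 'I_M} | [&& a t, 0 < t, FQlegal S & allin S b]].
have eD : [set S : {set 'I_M} | FQlegal S && allin S a] :&: [set S : {set 'I_M} | x \in S] = (fun S : {set 'I_M} => x |: S) @: D.
  apply/setP => S; rewrite !inE; apply/idP/imsetP.
    case/andP=> /andP[LS AS] xS.
    have F := legal_facts LS.
    have tS : inS S t by rewrite -xt inS_val.
    have [/andP[_ t0]] := (F t t tS tS, 0).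
    exists (S :\ x); last by rewrite setD1K.
    rewrite inE t0 (allinP _ _ AS t tS) /=; apply/andP; split.
      move/legalP: LS => LS; apply/legalP; apply: legalN_sub LS => n.
      by rewrite inS_setD1 => /andP[].
    apply/allinP => n; rewrite inS_setD1 xt => /andP[nt nS].
    by rewrite /b (allinP _ _ AS n nS) eq_sym nt; case/andP: (F t n tS nS).
  case=> S' ; rewrite inE => /and4P[at0 t0 LS' AS'] ->.
  rewrite setU11 andbT; apply/andP; split.
    apply/legalP; apply: (@legalN_sub (fun n => (t == n) || inS S' n)) => [n|].
      by rewrite inS_setU1.
    apply/legalN_add; split => //; first by apply/legalP.
    by move=> y /(allinP _ _ AS') /and3P[].
  apply/allinP => n; rewrite inS_setU1 => /orP[/eqP<-//|/(allinP _ _ AS') /and3P[] //].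
rewrite eD card_in_imset; last first.
  move=> S1 S2; rewrite !inE => /and4P[_ _ _ A1] /and4P[_ _ _ A2] e.
  have n1 : x \notin S1 by apply/negP; rewrite -inS_val => /(allinP _ _ A1) /and3P[_]; rewrite xt eqxx.
  have n2 : x \notin S2 by apply/negP; rewrite -inS_val => /(allinP _ _ A2) /and3P[_]; rewrite xt eqxx.
  by rewrite -(setU1K n1) -(setU1K n2) e.
case: ifP => C.
  apply: eq_card => S; rewrite !inE; case/andP: C => -> -> //.
apply/eqP; rewrite cards_eq0; apply/eqP/setP => S; rewrite !inE.
by move: C; case: (a t) => //=; case: (0 < t).
Qed.

Definition T k := #|[set S : {set 'I_k.+1} | FQlegal S]|.

Lemma Cnt_T M k : k < M -> Cnt M (fun y => y <= k) = T k.
Proof.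
move=> hk; rewrite /Cnt (card_widen hk).
  apply: eq_card => S; rewrite !inE legal_widen.
  suff -> : allin (widen_ord hk @: S) (fun y => y <= k) by rewrite andbT.
  apply/allinP => n; rewrite inS_widen => /inS_lt; lia.
move=> S /andP[_ /allinP H] n /H; lia.
Qed.

Lemma cf1 t y : y + 5 <= t -> compat t y.
Proof. rewrite /compat; lia. Qed.

Lemma tr2 k y : 7 <= k -> ([&& y <= k, y != k & compat k y] && (y != k - 2)) = (y <= k - 5).
Proof.
move=> hk; apply/idP/idP => [/andP[/and3P[a b /cc c] d]|h]; first by lia.
have c : compat k y by apply: cf1; lia.
rewrite c; lia.
Qed.

Lemma tr3 k y : 7 <= k ->
  [&& [&& y <= k, y != k & compat k y], y != k - 2 & compat (k-2) y] = (y <= k - 7).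
Proof.
move=> hk; apply/idP/idP => [/and3P[/and3P[a b /cc c] d /cc e]|h]; first by lia.
have c : compat k y by apply: cf1; lia.
have e : compat (k-2) y by apply: cf1; lia.
rewrite c e; lia.
Qed.

Lemma T_rec k : 7 <= k -> T k = T k.-1 + T (k-5) + T (k-7).
Proof.
move=> hk.
rewrite -(@Cnt_T k.+1 k) // (@Cnt_split k.+1 _ k) //.
have -> : Cnt k.+1 (fun y => (y <= k) && (y != k)) = T k.-1.
  rewrite -(@Cnt_T k.+1 k.-1); last by lia.
  by apply: Cnt_ext => y; lia.
rewrite leqnn /= (ltn_trans _ hk) //.
rewrite (@Cnt_split k.+1 _ (k-2)); last by lia.
have -> : [&& k - 2 <= k, k - 2 != k & compat k (k - 2)] && (0 < k - 2) = true.
  have c : compat k (k-2) by rewrite /compat; lia.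
  by rewrite c andbT; lia.
rewrite -addnA; congr (_ + (_ + _)).
  rewrite -(@Cnt_T k.+1 (k-5)); last by lia.
  by apply: Cnt_ext => y; apply: tr2.
rewrite -(@Cnt_T k.+1 (k-7)); last by lia.
by apply: Cnt_ext => y; apply: tr3.
Qed.

Lemma T_pos k : 0 < T k.
Proof.
rewrite /T; apply/card_gt0P; exists set0; rewrite inE; exact: legal_empty.
Qed.

Lemma inS_of N (S : {set 'I_N}) x : x \in S -> inS S x.
Proof. by rewrite inS_val. Qed.

Lemma sumq_qQ q : IsFQ q -> forall N (S : {set 'I_N}), FQlegal S -> sumq q S = sumq Q S.
Proof.
move=> hq N S HS; apply: sumq_ext => n hn; apply: (q_eq hq).
by have := legal_facts HS hn hn => /andP[].
Qed.

Lemma A_bounds q (hq : IsFQ q) n : 2 <= n ->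
  T (n-2) <= \sum_(m < q n.+1) dFQ q m <= T n.
Proof.
move=> hn.
rewrite (q_eq hq) //.
set M := Q n.+1.
have hM : n < M by have := Qge n.+1; rewrite /M; lia.
have e : \sum_(m < M) dFQ q m =
    \sum_(m < M) #|[set S : {set 'I_M} | FQlegal S && (sumq q S == m)]|.
  apply: eq_bigr => m _; rewrite /dFQ (card_widen (ltn_ord m)).
    apply: eq_card => S; by rewrite !inE legal_widen sumq_widen.
  move=> S /andP[HS /eqP Hs] k /inSP[x xS <-].
  have := sumq_ge q xS; rewrite Hs.
  have := legal_facts HS (inS_of xS) (inS_of xS) => /andP[_ x0].
  rewrite (q_eq hq x0); have := Qge x; lia.
rewrite e (sum_fibers (fun S : {set 'I_M} => FQlegal S) (fun S => sumq q S)).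
apply/andP; split.
  rewrite -(@Cnt_T M (n-2)); last by lia.
  apply: subset_leq_card; apply/subsetP => S; rewrite !inE => /andP[HS AS].
  rewrite HS (sumq_qQ hq HS) /=.
  have H : forall k, inS S k -> k < n - 1 by move=> k /(allinP _ _ AS); lia.
  have := UB HS H; have -> : (n-1).+2 = n.+1 by lia.
  by [].
rewrite -(@Cnt_T M n) //.
apply: subset_leq_card; apply/subsetP => S; rewrite !inE => /andP[HS Hs].
rewrite HS /=; apply/allinP => k /inSP[x xS <-].
have := sumq_ge q xS.
have := legal_facts HS (inS_of xS) (inS_of xS) => /andP[_ x0].
rewrite (q_eq hq x0) => hx.
case: (leqP x n) => // hxn.
have := Qmono (m := n.+1) (n := x) erefl hxn; rewrite -/M; lia.
Qed.

Theorem mainTheorem12 (q : nat -> nat) (hq : IsFQ q) (r1 lam1 : R)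
  (hr1 : (r1 ^ 7 - r1 ^ 6 - r1 ^ 2 - 1 = 0)%R)
  (hr1max : forall r : R, (r ^ 7 - r ^ 6 - r ^ 2 - 1 = 0)%R -> (r <= r1)%R)
  (hlam1 : (lam1 ^ 3 - lam1 - 1 = 0)%R) :
  exists C1 C2 : R, (0 < C1)%R /\ (C1 < C2)%R /\
    exists N : nat, forall n : nat, (N <= n)%N ->
      (C1 * (r1 / lam1) ^ n <= dFQave q n <= C2 * (r1 / lam1) ^ n)%R.
Proof.
have r1g := r1_gt1 _ hr1.
have lg := lam_gt1 _ hlam1.
pose Tr := fun k => INR (T k).
pose B := (Tr 0%nat + Tr 1%nat + Tr 2%nat + Tr 3%nat + Tr 4%nat + Tr 5%nat + Tr 6%nat)%R.
have Tpos : forall k, (1 <= Tr k)%R.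
  move=> k; rewrite /Tr; apply: (le_INR 1); apply/leP; exact: T_pos.
have E7 : forall k, (k + 7)%coq_nat = k.+4.+3 by move=> k; lia.
have E6 : forall k, (k + 6)%coq_nat = k.+4.+2 by move=> k; lia.
have E2 : forall k, (k + 2)%coq_nat = k.+2 by move=> k; lia.
have E3 : forall k, (k + 3)%coq_nat = k.+3 by move=> k; lia.
have E1 : forall k, (k + 1)%coq_nat = k.+1 by move=> k; lia.
have hT7 : forall k, (r1^k <= r1^6 * Tr k /\ Tr k <= B * r1^k)%R.
  apply: growth7 => //.
  - lra.
  - move=> k hk; split; first exact: Tpos.
    have := Tpos 0; have := Tpos 1; have := Tpos 2; have := Tpos 3; have := Tpos 4;
    have := Tpos 5; have := Tpos 6.
    rewrite /B; case: k hk => [|[|[|[|[|[|[|k]]]]]]] hk; try lra; exfalso; lia.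
  - move=> k; rewrite E7 E6 E2 /Tr.
    have h := @T_rec k.+4.+3 ltac:(lia).
    rewrite /= !subSS !subn0 in h.
    rewrite h -!plusE !plus_INR; reflexivity.
pose Qv := fun k => INR (Q k.+2).
have hQ : forall k, (lam1^k <= lam1^2 * Qv k /\ Qv k <= 4 * lam1^k)%R.
  apply: growth3 => //.
  - lra.
  - move=> k hk; rewrite /Qv.
    case: k hk => [|[|[|k]]] hk /=; try (split; lra); exfalso; lia.
  - move=> k; rewrite E3 E1 /Qv.
    have h := QS k.
    rewrite h -!plusE plus_INR; reflexivity.
pose a := fun n => INR (\sum_(m < q n.+1) dFQ q m).
have ha : forall n, (3 <= n)%coq_nat -> (Tr (n-2)%coq_nat <= a n <= Tr n)%R.
  move=> n hn; have := A_bounds hq (n := n) ltac:(lia) => /andP[h1 h2].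
  rewrite /Tr /a; split; apply: le_INR; apply/leP => //.
have [C1 [C2 [h1 [h2 H]]]] := @final_bound _ _ _ _ _ _ r1g lg ha hT7 hQ.
exists C1, C2; split => //; split => //; exists 3 => n hn.
have := H n ltac:(lia).
have -> : (a n / Qv (n - 1)%coq_nat)%R = dFQave q n.
  rewrite /a /Qv /dFQave (q_eq hq (i := n.+1)) //.
  have -> : (n - 1)%coq_nat.+2 = n.+1 by lia.
  by [].
by [].
Qed.
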